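(* With $I_i'$ ($i=1,\dots,M$) as follows: base stations $\mathcal{M}=\{1,\dots,M\}$, test points $\mathcal{N}=\{1,\dots,N\}$, $d_j>0$, $X=(x_{i,j})\in\{0,1\}^{M\times N}$ with every row containing at least one $1$, $g_{i,j}\ge0$ with $g_{i,j}>0$ whenever $x_{i,j}=1$, $P_i>0$, $\sigma^2>0$, $K,B,\eta,\bar\omega>0$, $\omega_{i,j}(\boldsymbol{\rho})=B\log_2\!\big(1+\frac{P_i g_{i,j}}{\eta(\sum_{l\ne i}P_l g_{l,j}\rho_l+\sigma^2)}\big)$ and $I_i'(\boldsymbol{\rho})=\sum_{j:\,x_{i,j}=1}\max\{d_j/(K\omega_{i,j}(\boldsymbol{\rho})),\,d_j/(K\bar\omega)\}$, define $I_i''(\boldsymbol{\rho})=\min\{I_i'(\boldsymbol{\rho}),1\}$ and $\mathcal{J}''=[I_1'',\dots,I_M'']^T:\mathbb{R}_+^M\to\mathbb{R}_{++}^M$. Then $\mathcal{J}''$ is a standard interference mapping satisfying $\mathcal{J}''(\boldsymbol{\rho})\le\mathbf{1}$ for all $\boldsymbol{\rho}\in\mathbb{R}_+^M$, and $\mathcal{J}''$ has a unique fixed point $\boldsymbol{\rho}^\star\in\mathbb{R}_+^M$ (i.e. $\boldsymbol{\rho}^\star=\mathcal{J}''(\boldsymbol{\rho}^\star)$), which lies in $(0,1]^M$.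
   Context: $\mathbb{R}_+$ denotes the nonnegative reals and $\mathbb{R}_{++}$ the strictly positive reals; $\mathbf{1}$ is the all-ones vector; vector inequalities are componentwise. A function $I:\mathbb{R}_+^M\to\mathbb{R}_{++}$ is called a standard interference function if it satisfies scalability ($\alpha I(\mathbf{x})>I(\alpha\mathbf{x})$ for all $\mathbf{x}\in\mathbb{R}_+^M$, $\alpha>1$) and monotonicity ($I(\mathbf{x}_1)\ge I(\mathbf{x}_2)$ whenever $\mathbf{x}_1\ge\mathbf{x}_2$). A standard interference mapping is a map $\mathbf{x}\mapsto[I_1(\mathbf{x}),\dots,I_M(\mathbf{x})]^T$ with each $I_i$ a standard interference function. *)

(* Defs.v *)
From Stdlib Require Import Reals Lra.
Open Scope R_scope.

(* Vectors in R^M are functions nat -> R, only indices 0..M-1 matter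
   (base station i of the paper is index i-1; test point j is index j-1). *)

Fixpoint rsum (n : nat) (f : nat -> R) : R :=
  match n with
  | O => 0
  | S k => rsum k f + f k
  end.

Definition log2 (a : R) : R := ln a / ln 2.

Definition omega (M : nat) (B eta sigma2 : R) (P : nat -> R) (g : nat -> nat -> R)
  (i j : nat) (rho : nat -> R) : R :=
  B * log2 (1 + P i * g i j /
    (eta * (rsum M (fun l => if Nat.eq_dec l i then 0 else P l * g l j * rho l) + sigma2))).

Definition Iprime (M N : nat) (d : nat -> R) (x : nat -> nat -> bool)
  (g : nat -> nat -> R) (P : nat -> R) (sigma2 K B eta wbar : R)
  (i : nat) (rho : nat -> R) : R :=
  rsum N (fun j => if x i j
                   then Rmax (d j / (K * omega M B eta sigma2 P g i j rho)) (d j / (K * wbar))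
                   else 0).

Definition Isecond (M N : nat) (d : nat -> R) (x : nat -> nat -> bool)
  (g : nat -> nat -> R) (P : nat -> R) (sigma2 K B eta wbar : R)
  (i : nat) (rho : nat -> R) : R :=
  Rmin (Iprime M N d x g P sigma2 K B eta wbar i rho) 1.

Definition nonneg_vec (M : nat) (rho : nat -> R) : Prop :=
  forall l, (l < M)%nat -> 0 <= rho l.

Definition vec_le (M : nat) (r1 r2 : nat -> R) : Prop :=
  forall l, (l < M)%nat -> r1 l <= r2 l.

Definition standard_interference_function (M : nat) (I : (nat -> R) -> R) : Prop :=
  (forall rho, nonneg_vec M rho -> 0 < I rho) /\
  (forall rho alpha, nonneg_vec M rho -> 1 < alpha ->
     I (fun l => alpha * rho l) < alpha * I rho) /\
  (forall r1 r2, nonneg_vec M r1 -> nonneg_vec M r2 -> vec_le M r2 r1 ->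
     I r2 <= I r1).

(* Main.v *)
Require Import Defs.
From Stdlib Require Import Reals Lra Lia.

Lemma ln_lt_m1 y : 1 < y -> ln y < y - 1.
Proof.
  intro H. assert (Hy : 0 < y) by lra.
  assert (ln y <> 0). { intro E. rewrite <- ln_1 in E. apply ln_inv in E; lra. }
  pose proof (exp_ineq1 _ H0). rewrite exp_ln in H1 by lra. lra.
Qed.

Lemma ln_ge_1m y : 0 < y -> 1 - / y <= ln y.
Proof.
  intro H. pose proof (exp_ineq1_le (ln (/ y))).
  rewrite exp_ln in H0 by (apply Rinv_0_lt_compat; lra).
  rewrite ln_Rinv in H0 by lra. lra.
Qed.

Lemma key_ln t a : 0 < t -> 1 < a -> ln (1 + t) < a * ln (1 + t / a).
Proof.
  intros Ht Ha. set (z := t / a).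
  assert (Hz : 0 < z) by (unfold z; apply Rdiv_lt_0_compat; lra).
  assert (Ht' : t = a * z) by (unfold z; field; lra).
  assert (E : ln (1 + t) = ln (1 + z) + ln ((1 + t) / (1 + z))).
  { rewrite <- ln_mult by (try apply Rdiv_lt_0_compat; lra). f_equal. field. lra. }
  assert (H1 : 1 < (1 + t) / (1 + z)).
  { apply (Rmult_lt_reg_r (1 + z)); [lra|]. unfold Rdiv. rewrite Rmult_assoc, Rinv_l by lra. nra. }
  pose proof (ln_lt_m1 _ H1).
  pose proof (ln_ge_1m (1 + z) ltac:(lra)).
  assert (Eq : (1 + t) / (1 + z) - 1 = (a - 1) * (1 - / (1 + z))).
  { rewrite Ht'. field. lra. }
  rewrite Eq in H. nra.
Qed.

Lemma ln_le' a b : 0 < a -> a <= b -> ln a <= ln b.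
Proof. intros Ha Hab. destruct (Rle_lt_or_eq_dec _ _ Hab). left; apply ln_increasing; lra. subst; lra. Qed.

Lemma rsum_ext n f h : (forall k, (k < n)%nat -> f k = h k) -> rsum n f = rsum n h.
Proof. induction n; simpl; intros; auto. rewrite IHn by (intros; apply H; lia). rewrite H by lia. auto. Qed.

Lemma rsum_le n f h : (forall k, (k < n)%nat -> f k <= h k) -> rsum n f <= rsum n h.
Proof. induction n; simpl; intros; [lra|]. pose proof (H n ltac:(lia)). pose proof (IHn ltac:(intros; apply H; lia)). lra. Qed.

Lemma rsum_scal n a f : rsum n (fun k => a * f k) = a * rsum n f.
Proof. induction n; simpl; [ring|]. rewrite IHn; ring. Qed.

Lemma rsum_zero n : rsum n (fun _ => 0) = 0.
Proof. induction n; simpl; [ring|]. rewrite IHn; ring. Qed.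

Lemma rsum_lt n f h : (forall k, (k < n)%nat -> f k <= h k) ->
  (exists k, (k < n)%nat /\ f k < h k) -> rsum n f < rsum n h.
Proof.
  induction n; simpl; intros H [k [Hk Hl]]; [lia|].
  destruct (Nat.eq_dec k n).
  - subst. pose proof (rsum_le n f h ltac:(intros; apply H; lia)). lra.
  - pose proof (IHn ltac:(intros; apply H; lia) ltac:(exists k; split; [lia|auto])).
    pose proof (H n ltac:(lia)). lra.
Qed.

Lemma argmax n (f : nat -> R) : (0 < n)%nat -> exists k, (k < n)%nat /\ forall m, (m < n)%nat -> f m <= f k.
Proof.
  induction n; intros; [lia|].
  destruct n.
  - exists 0%nat. split; [lia|]. intros m Hm. assert (m = 0%nat) by lia. subst; lra.
  - destruct (IHn ltac:(lia)) as [k [Hk Hm]].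
    destruct (Rle_or_lt (f (S n)) (f k)).
    + exists k. split; [lia|]. intros m Hm'. destruct (Nat.eq_dec m (S n)). subst; auto. apply Hm; lia.
    + exists (S n). split; [lia|]. intros m Hm'. destruct (Nat.eq_dec m (S n)). subst; lra.
      pose proof (Hm m ltac:(lia)). lra.
Qed.

Lemma uniq_gen M (J : nat -> (nat -> R) -> R) :
  (forall i, (i < M)%nat -> standard_interference_function M (J i)) ->
  forall r r', nonneg_vec M r -> nonneg_vec M r' ->
  (forall i, (i < M)%nat -> r i = J i r) -> (forall i, (i < M)%nat -> r' i = J i r') ->
  forall l, (l < M)%nat -> r' l <= r l.
Proof.
  intros HJ r r' Hr Hr' Fr Fr' l Hl.
  destruct (Rle_or_lt (r' l) (r l)) as [|Hlt]; auto. exfalso.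
  assert (Hpos : forall m, (m < M)%nat -> 0 < r m).
  { intros m Hm. rewrite Fr by auto. destruct (HJ m Hm) as [H1 _]. apply H1; auto. }
  destruct (argmax M (fun m => r' m / r m) ltac:(lia)) as [k [Hk Hmax]].
  set (a := r' k / r k).
  assert (Ha : 1 < a).
  { pose proof (Hmax l Hl). simpl in H. fold a in H. pose proof (Hpos l Hl).
    assert (1 < r' l / r l). { apply (Rmult_lt_reg_r (r l)); auto. unfold Rdiv. rewrite Rmult_assoc, Rinv_l by lra. lra. }
    lra. }
  assert (Hle : vec_le M r' (fun m => a * r m)).
  { intros m Hm. pose proof (Hmax m Hm). simpl in H. fold a in H. pose proof (Hpos m Hm).
    replace (r' m) with ((r' m / r m) * r m) by (field; lra). apply Rmult_le_compat_r; lra. }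
  assert (Hnn : nonneg_vec M (fun m => a * r m)).
  { intros m Hm. pose proof (Hpos m Hm). simpl. nra. }
  destruct (HJ k Hk) as [_ [Hs Hm]].
  pose proof (Hm _ _ Hnn Hr' Hle). pose proof (Hs r a Hr Ha).
  rewrite <- Fr' in H by auto. rewrite <- Fr in H0 by auto.
  assert (a * r k = r' k) by (unfold a; field; pose proof (Hpos k Hk); lra). lra.
Qed.

Lemma exist_gen M (J : nat -> (nat -> R) -> R) :
  (forall i, (i < M)%nat -> forall r1 r2, nonneg_vec M r1 -> nonneg_vec M r2 -> vec_le M r2 r1 -> J i r2 <= J i r1) ->
  (forall i rho, 0 <= J i rho <= 1) ->
  exists rs, (forall l, 0 <= rs l <= 1) /\ (forall i, (i < M)%nat -> rs i = J i rs).
Proof.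
  intros Hmono Hb.
  set (Sset := fun rho : nat -> R => (forall l, 0 <= rho l <= 1) /\ (forall l, (l < M)%nat -> rho l <= J l rho)).
  set (E := fun l v => exists rho, Sset rho /\ v = rho l).
  assert (S0 : Sset (fun _ => 0)).
  { split. intros; lra. intros l _. apply Hb. }
  assert (bE : forall l, bound (E l)).
  { intros l. exists 1. intros v [rho [[H1 _] ->]]. apply H1. }
  assert (nE : forall l, exists v, E l v).
  { intros l. exists 0. exists (fun _ => 0). split; auto. }
  set (rs := fun l => proj1_sig (completeness (E l) (bE l) (nE l))).
  assert (Hlub : forall l, is_lub (E l) (rs l)).
  { intros l. unfold rs. destruct (completeness (E l) (bE l) (nE l)); auto. }
  assert (Hup : forall rho, Sset rho -> forall l, rho l <= rs l).
  { intros rho Hs l. apply (proj1 (Hlub l)). exists rho; auto. }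
  assert (Hbox : forall l, 0 <= rs l <= 1).
  { intros l. split. apply (Hup _ S0 l). apply (proj2 (Hlub l)). intros v [rho [[H1 _] ->]]. apply H1. }
  assert (Hnn : forall rho, (forall l, 0 <= rho l <= 1) -> nonneg_vec M rho).
  { intros rho H l _. apply H. }
  assert (Hsub : forall l, (l < M)%nat -> rs l <= J l rs).
  { intros l Hl. apply (proj2 (Hlub l)). intros v [rho [Hs ->]].
    apply Rle_trans with (J l rho). apply (proj2 Hs); auto.
    apply Hmono; [auto|apply Hnn, Hbox|apply Hnn, (proj1 Hs)|intros m _; apply Hup; auto]. }
  set (rp := fun l => J l rs).
  assert (Srp : Sset rp).
  { split. intros l; apply Hb. intros l Hl. unfold rp at 1. apply Hmono; [auto|apply Hnn; intros; apply Hb|apply Hnn, Hbox|intros m Hm; apply Hsub; auto]. }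
  exists rs. split; auto. intros i Hi. apply Rle_antisym. apply Hsub; auto.
  apply (Hup rp Srp i).
Qed.

Theorem mainTheorem4 (M N : nat) (d : nat -> R) (x : nat -> nat -> bool)
  (g : nat -> nat -> R) (P : nat -> R) (sigma2 K B eta wbar : R)
  (Hd : forall j, (j < N)%nat -> 0 < d j)
  (Hx : forall i, (i < M)%nat -> exists j, (j < N)%nat /\ x i j = true)
  (Hg : forall i j, (i < M)%nat -> (j < N)%nat -> 0 <= g i j)
  (Hgx : forall i j, (i < M)%nat -> (j < N)%nat -> x i j = true -> 0 < g i j)
  (HP : forall i, (i < M)%nat -> 0 < P i)
  (Hsigma2 : 0 < sigma2) (HK : 0 < K) (HB : 0 < B) (Heta : 0 < eta) (Hwbar : 0 < wbar) :
  let J := Isecond M N d x g P sigma2 K B eta wbar in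
  (forall i, (i < M)%nat -> standard_interference_function M (J i)) /\
  (forall rho, nonneg_vec M rho -> forall i, (i < M)%nat -> J i rho <= 1) /\
  (exists rhostar : nat -> R,
     nonneg_vec M rhostar /\
     (forall i, (i < M)%nat -> rhostar i = J i rhostar) /\
     (forall rho, nonneg_vec M rho ->
        (forall i, (i < M)%nat -> rho i = J i rho) ->
        forall i, (i < M)%nat -> rho i = rhostar i) /\
     (forall i, (i < M)%nat -> 0 < rhostar i <= 1)).
Proof.
  intros J.
  set (S := fun i j (rho : nat -> R) => rsum M (fun l => if Nat.eq_dec l i then 0 else P l * g l j * rho l)).
  assert (Hom : forall i j rho, omega M B eta sigma2 P g i j rho =
     B * (ln (1 + P i * g i j / (eta * (S i j rho + sigma2))) / ln 2)) by reflexivity.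
  assert (Hln2 : 0 < ln 2) by (rewrite <- ln_1; apply ln_increasing; lra).
  assert (S_nn : forall i j rho, (j < N)%nat -> nonneg_vec M rho -> 0 <= S i j rho).
  { intros i j rho Hj Hr. rewrite <- (rsum_zero M). apply rsum_le. intros k Hk.
    destruct (Nat.eq_dec k i). lra. pose proof (HP k Hk). pose proof (Hg k j Hk Hj). pose proof (Hr k Hk).
    apply Rmult_le_pos; [apply Rmult_le_pos|]; lra. }
  assert (S_mono : forall i j r1 r2, (j < N)%nat -> vec_le M r2 r1 -> S i j r2 <= S i j r1).
  { intros i j r1 r2 Hj Hle. apply rsum_le. intros k Hk.
    destruct (Nat.eq_dec k i). lra. pose proof (HP k Hk). pose proof (Hg k j Hk Hj). pose proof (Hle k Hk).
    apply Rmult_le_compat_l; [apply Rmult_le_pos|]; lra. }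
  assert (S_scal : forall i j rho a, S i j (fun l => a * rho l) = a * S i j rho).
  { intros i j rho a. unfold S. rewrite <- rsum_scal. apply rsum_ext. intros k _.
    destruct (Nat.eq_dec k i); ring. }
  assert (om_pos : forall i j rho, (i < M)%nat -> (j < N)%nat -> x i j = true -> nonneg_vec M rho ->
            0 < omega M B eta sigma2 P g i j rho).
  { intros i j rho Hi Hj Hxij Hr. rewrite Hom.
    pose proof (S_nn i j rho Hj Hr). pose proof (HP i Hi). pose proof (Hgx i j Hi Hj Hxij).
    assert (0 < P i * g i j / (eta * (S i j rho + sigma2))).
    { apply Rdiv_lt_0_compat. nra. apply Rmult_lt_0_compat; lra. }
    apply Rmult_lt_0_compat; auto. apply Rdiv_lt_0_compat; auto.
    rewrite <- ln_1. apply ln_increasing; lra. }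
  assert (om_mono : forall i j r1 r2, (i < M)%nat -> (j < N)%nat -> x i j = true ->
            nonneg_vec M r1 -> nonneg_vec M r2 -> vec_le M r2 r1 ->
            omega M B eta sigma2 P g i j r1 <= omega M B eta sigma2 P g i j r2).
  { intros i j r1 r2 Hi Hj Hxij H1 H2 Hle. rewrite !Hom.
    pose proof (S_nn i j r1 Hj H1). pose proof (S_nn i j r2 Hj H2). pose proof (S_mono i j r1 r2 Hj Hle).
    pose proof (HP i Hi). pose proof (Hgx i j Hi Hj Hxij).
    apply Rmult_le_compat_l; [lra|]. apply Rmult_le_compat_r; [left; apply Rinv_0_lt_compat; lra|].
    apply ln_le'. 
    { assert (0 < P i * g i j / (eta * (S i j r1 + sigma2))).
      { apply Rdiv_lt_0_compat. nra. apply Rmult_lt_0_compat; lra. } lra. }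
    apply Rplus_le_compat_l. unfold Rdiv. apply Rmult_le_compat_l; [nra|].
    apply Rinv_le_contravar. apply Rmult_lt_0_compat; lra. apply Rmult_le_compat_l; lra. }
  assert (om_scal : forall i j rho a, (i < M)%nat -> (j < N)%nat -> x i j = true ->
            nonneg_vec M rho -> 1 < a ->
            omega M B eta sigma2 P g i j rho < a * omega M B eta sigma2 P g i j (fun l => a * rho l)).
  { intros i j rho a Hi Hj Hxij Hr Ha. rewrite !Hom, S_scal.
    pose proof (S_nn i j rho Hj Hr). pose proof (HP i Hi). pose proof (Hgx i j Hi Hj Hxij).
    set (t := P i * g i j / (eta * (S i j rho + sigma2))).
    assert (Ht : 0 < t). { apply Rdiv_lt_0_compat. nra. apply Rmult_lt_0_compat; lra. }
    pose proof (key_ln t a Ht Ha).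
    assert (t / a <= P i * g i j / (eta * (a * S i j rho + sigma2))).
    { unfold t, Rdiv. rewrite Rmult_assoc, <- Rinv_mult. apply Rmult_le_compat_l; [nra|].
      apply Rinv_le_contravar. apply Rmult_lt_0_compat; [lra|nra].
      assert (0 <= eta * sigma2 * (a - 1)) by (apply Rmult_le_pos; [apply Rmult_le_pos|]; lra). nra. }
    assert (ln (1 + t / a) <= ln (1 + P i * g i j / (eta * (a * S i j rho + sigma2)))).
    { apply ln_le'. assert (0 < t / a) by (apply Rdiv_lt_0_compat; lra). lra. lra. }
    assert (ln (1 + t) < a * ln (1 + P i * g i j / (eta * (a * S i j rho + sigma2)))) by nra.
    unfold Rdiv at 1 3. fold t.
    assert (0 < B * / ln 2) by (apply Rmult_lt_0_compat; [lra| apply Rinv_0_lt_compat; lra]).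
    nra. }
  set (T := fun i j rho => if x i j
                   then Rmax (d j / (K * omega M B eta sigma2 P g i j rho)) (d j / (K * wbar))
                   else 0).
  assert (HIp : forall i rho, Iprime M N d x g P sigma2 K B eta wbar i rho = rsum N (fun j => T i j rho)) by reflexivity.
  assert (T_nn : forall i j rho, (j < N)%nat -> 0 <= T i j rho).
  { intros i j rho Hj. unfold T. destruct (x i j); [|lra].
    apply Rle_trans with (d j / (K * wbar)); [|apply Rmax_r].
    left; apply Rdiv_lt_0_compat; [apply Hd; auto| apply Rmult_lt_0_compat; lra]. }
  assert (Ip_nn : forall i rho, 0 <= Iprime M N d x g P sigma2 K B eta wbar i rho).
  { intros i rho. rewrite HIp, <- (rsum_zero N). apply rsum_le. intros; apply T_nn; auto. }
  assert (Ip_pos : forall i rho, (i < M)%nat -> 0 < Iprime M N d x g P sigma2 K B eta wbar i rho).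
  { intros i rho Hi. rewrite HIp, <- (rsum_zero N). apply rsum_lt. intros; apply T_nn; auto.
    destruct (Hx i Hi) as [j [Hj Hxij]]. exists j. split; auto. unfold T. rewrite Hxij.
    apply Rlt_le_trans with (d j / (K * wbar)); [|apply Rmax_r].
    apply Rdiv_lt_0_compat; [apply Hd; auto| apply Rmult_lt_0_compat; lra]. }
  assert (Ip_mono : forall i r1 r2, (i < M)%nat -> nonneg_vec M r1 -> nonneg_vec M r2 -> vec_le M r2 r1 ->
     Iprime M N d x g P sigma2 K B eta wbar i r2 <= Iprime M N d x g P sigma2 K B eta wbar i r1).
  { intros i r1 r2 Hi H1 H2 Hle. rewrite !HIp. apply rsum_le. intros j Hj. unfold T.
    destruct (x i j) eqn:Hxij; [|lra]. apply Rle_max_compat_r.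
    pose proof (om_pos i j r1 Hi Hj Hxij H1). pose proof (om_pos i j r2 Hi Hj Hxij H2).
    pose proof (om_mono i j r1 r2 Hi Hj Hxij H1 H2 Hle). pose proof (Hd j Hj).
    unfold Rdiv. apply Rmult_le_compat_l; [lra|]. apply Rinv_le_contravar. nra. nra. }
  assert (Ip_scal : forall i rho a, (i < M)%nat -> nonneg_vec M rho -> 1 < a ->
     Iprime M N d x g P sigma2 K B eta wbar i (fun l => a * rho l) <
       a * Iprime M N d x g P sigma2 K B eta wbar i rho).
  { intros i rho a Hi Hr Ha. rewrite !HIp, <- rsum_scal.
    assert (Hnn : nonneg_vec M (fun l => a * rho l)).
    { intros l Hl. pose proof (Hr l Hl). simpl. nra. }
    assert (Hterm : forall j, (j < N)%nat -> x i j = true -> T i j (fun l => a * rho l) < a * T i j rho).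
    { intros j Hj Hxij. unfold T. rewrite Hxij.
      pose proof (om_pos i j rho Hi Hj Hxij Hr). pose proof (om_pos i j _ Hi Hj Hxij Hnn).
      pose proof (om_scal i j rho a Hi Hj Hxij Hr Ha). pose proof (Hd j Hj).
      set (w := omega M B eta sigma2 P g i j rho) in *.
      set (w' := omega M B eta sigma2 P g i j (fun l => a * rho l)) in *.
      assert (d j / (K * w') < a * (d j / (K * w))).
      { apply (Rmult_lt_reg_r (K * w * w')). apply Rmult_lt_0_compat; [apply Rmult_lt_0_compat|]; lra.
        replace (d j / (K * w') * (K * w * w')) with (d j * w) by (field; repeat split; lra).
        replace (a * (d j / (K * w)) * (K * w * w')) with (d j * (a * w')) by (field; repeat split; lra).
        apply Rmult_lt_compat_l; lra. }
      assert (d j / (K * wbar) < a * (d j / (K * wbar))).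
      { assert (0 < d j / (K * wbar)) by (apply Rdiv_lt_0_compat; nra). nra. }
      assert (a * Rmax (d j / (K * w)) (d j / (K * wbar)) = Rmax (a * (d j / (K * w))) (a * (d j / (K * wbar)))).
      { rewrite RmaxRmult; auto; lra. }
      rewrite H5. apply Rmax_lub_lt; [apply Rlt_le_trans with (a * (d j / (K * w))); [auto|apply Rmax_l]
                                  |apply Rlt_le_trans with (a * (d j / (K * wbar))); [auto|apply Rmax_r]]. }
    apply rsum_lt.
    - intros j Hj. destruct (x i j) eqn:Hxij. left; apply Hterm; auto. unfold T; rewrite Hxij; lra.
    - destruct (Hx i Hi) as [j [Hj Hxij]]. exists j; split; auto. }
  assert (HJ : forall i rho, J i rho = Rmin (Iprime M N d x g P sigma2 K B eta wbar i rho) 1) by reflexivity.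
  assert (Jstd : forall i, (i < M)%nat -> standard_interference_function M (J i)).
  { intros i Hi. split; [|split].
    - intros rho Hr. rewrite HJ. apply Rmin_glb_lt. apply Ip_pos; auto. lra.
    - intros rho a Hr Ha. rewrite !HJ.
      destruct (Rle_or_lt 1 (Iprime M N d x g P sigma2 K B eta wbar i rho)).
      + rewrite (Rmin_right (Iprime M N d x g P sigma2 K B eta wbar i rho) 1) by lra. pose proof (Rmin_r (Iprime M N d x g P sigma2 K B eta wbar i (fun l => a * rho l)) 1). lra.
      + rewrite (Rmin_left (Iprime M N d x g P sigma2 K B eta wbar i rho) 1) by lra. pose proof (Rmin_l (Iprime M N d x g P sigma2 K B eta wbar i (fun l => a * rho l)) 1).
        pose proof (Ip_scal i rho a Hi Hr Ha). lra.
    - intros r1 r2 H1 H2 Hle. rewrite !HJ. apply Rle_min_compat_r. apply Ip_mono; auto. }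
  assert (Jb : forall i rho, 0 <= J i rho <= 1).
  { intros i rho. rewrite HJ. split. apply Rmin_glb; [apply Ip_nn|lra]. apply Rmin_r. }
  destruct (exist_gen M J ltac:(intros i Hi; apply (Jstd i Hi)) Jb) as [rs [Hbox Hfix]].
  split; [auto|split].
  { intros rho _ i _. apply Jb. }
  exists rs. assert (Hnn : nonneg_vec M rs) by (intros l _; apply Hbox).
  split; [auto|split; [auto|split]].
  - intros rho Hr Hf i Hi. apply Rle_antisym.
    + apply (uniq_gen M J Jstd rs rho); auto.
    + apply (uniq_gen M J Jstd rho rs); auto.
  - intros i Hi. split; [|apply Hbox]. rewrite Hfix by auto. apply (proj1 (Jstd i Hi)); auto.
Qed.
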